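(* Let $n\ge 2$ and $0<r<1$, and let \[\mathcal{S}_r = \left\{\lambda\begin{pmatrix} 1 & x^*\\ y & yx^*\end{pmatrix} : x,y\in\mathbb{C}^{n-1},\ \|x\|<r,\ \|y\|<r,\ \lambda\in\mathbb{C}\right\}\subseteq\mathcal{M}_n(\mathbb{C}).\] Then $\mathcal{S}_r$ is a semigroup and it is $\frac{4r^2}{(1-r^2)^2}$-submultiplicative.
   Context: Here $\|\cdot\|$ is the Euclidean norm, $x^*$ is the conjugate transpose of a column vector, $\sigma(M)$ is the spectrum and $\rho(M)$ the spectral radius of a matrix $M$. A semigroup $\mathcal{S}\subseteq\mathcal{M}_n(\mathbb{C})$ is called $\varepsilon$-submultiplicative if for all $A,B\in\mathcal{S}$ and every $\gamma\in\sigma(AB)$ there exist $\alpha\in\sigma(A)$ and $\beta\in\sigma(B)$ such that $|\gamma-\alpha\beta|\le\varepsilon\,\rho(A)\rho(B)$. *)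

(* Defs.v *)
From HB Require Import structures.
From mathcomp Require Import all_boot all_order all_algebra.
From mathcomp Require Import complex.
From mathcomp Require Import reals.
Set Implicit Arguments. Unset Strict Implicit. Unset Printing Implicit Defensive.
Import Order.TTheory GRing.Theory Num.Theory.
Local Open Scope ring_scope.

Section Defs.
Variable C : numClosedFieldType.

Definition vnorm m (x : 'cV[C]_m) : C := sqrtC (\sum_i `|x i 0| ^+ 2).

Definition cadj m (x : 'cV[C]_m) : 'rV[C]_m := (map_mx Num.conj x)^T.

Definition spectrum n (M : 'M[C]_n) : pred C := eigenvalue M.

Definition eigseq n (M : 'M[C]_n) : seq C :=
  sval (closed_field_poly_normal (char_poly M)).

Definition specrad n (M : 'M[C]_n) : C :=
  \big[Num.max/0]_(a <- eigseq M) `|a|.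

Definition is_semigroup n (S : 'M[C]_n -> Prop) : Prop :=
  forall A B, S A -> S B -> S (A *m B).

Definition eps_submultiplicative n (eps : C) (S : 'M[C]_n -> Prop) : Prop :=
  forall A B, S A -> S B ->
  forall g, spectrum (A *m B) g ->
  exists a b, [/\ spectrum A a, spectrum B b &
                 `|g - a * b| <= eps * specrad A * specrad B].

Definition Sr m (r : C) : 'M[C]_(1 + m) -> Prop :=
  fun M => exists (x y : 'cV[C]_m) (lam : C),
    [/\ vnorm x < r, vnorm y < r &
        M = lam *: block_mx (1%:M : 'M[C]_1) (cadj x) y (y *m cadj x)].
End Defs.

Arguments Sr {C} m r _.
Arguments vnorm {C} {m} x.
Arguments cadj {C} {m} x.
Arguments specrad {C} {n} M.
Arguments spectrum {C} {n} M _.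
Arguments is_semigroup {C} {n} S.
Arguments eps_submultiplicative {C} {n} eps S.

(* Main.v *)
Require Import Defs.
From HB Require Import structures.
From mathcomp Require Import all_boot all_order all_algebra.
From mathcomp Require Import complex.
From mathcomp Require Import reals.
From mathcomp Require Import ring zify.
Import Order.TTheory GRing.Theory Num.Theory.
Local Open Scope ring_scope.

Section Gen.
Variable C : numClosedFieldType.

Lemma cs_real (I : finType) (a b : I -> C) :
  (forall i, 0 <= a i) -> (forall i, 0 <= b i) ->
  \sum_i a i * b i <= sqrtC (\sum_i a i ^+ 2) * sqrtC (\sum_i b i ^+ 2).
Proof.
move=> a0 b0.
set A := \sum_i a i ^+ 2; set B := \sum_i b i ^+ 2.
have A0 : 0 <= A by apply: sumr_ge0 => i _; apply: exprn_ge0.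
have B0 : 0 <= B by apply: sumr_ge0 => i _; apply: exprn_ge0.
set sA := sqrtC A; set sB := sqrtC B.
have sA0 : 0 <= sA by rewrite sqrtC_ge0.
have sB0 : 0 <= sB by rewrite sqrtC_ge0.
have [/eqP|nz] := eqVneq (sA * sB) 0.
  rewrite mulf_eq0 => /orP[] /eqP; rewrite /sA /sB => /eqP; rewrite sqrtC_eq0 => /eqP H.
  - have Ha := psumr_eq0P (fun i _ => exprn_ge0 2 (a0 i)) H.
    rewrite big1 ?mulr_ge0 // => i _.
    by have /eqP := Ha i isT; rewrite expf_eq0 /= => /eqP ->; rewrite mul0r.
  - have Hb := psumr_eq0P (fun i _ => exprn_ge0 2 (b0 i)) H.
    rewrite big1 ?mulr_ge0 // => i _.
    by have /eqP := Hb i isT; rewrite expf_eq0 /= => /eqP ->; rewrite mulr0.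
have pos : 0 < sA * sB by rewrite lt_def nz mulr_ge0.
have key : forall i, 2 * (a i * b i) * (sA * sB) <= a i ^+ 2 * sB ^+ 2 + b i ^+ 2 * sA ^+ 2.
  move=> i; rewrite -subr_ge0.
  have -> : a i ^+ 2 * sB ^+ 2 + b i ^+ 2 * sA ^+ 2 - 2 * (a i * b i) * (sA * sB)
            = (a i * sB - b i * sA) ^+ 2 by ring.
  apply: real_exprn_even_ge0 => //.
  by apply: rpredB; apply: rpredM; apply: ger0_real.
have S := ler_sum (index_enum I) (fun i _ => key i) (P := xpredT).
rewrite -!mulr_suml big_split /= -!mulr_suml -mulr_sumr -/A -/B /sA /sB !sqrtCK in S.
rewrite -(ler_pM2r pos) -(ler_pM2l (ltr0Sn _ 1)) mulrA.
apply: (le_trans S).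
have e : 2 * (sA * sB * (sA * sB)) = 2 * (sA ^+ 2 * sB ^+ 2) by ring.
rewrite e /sA /sB !sqrtCK.
by rewrite le_eqVlt; apply/orP; left; apply/eqP; ring.
Qed.

Variable m : nat.
Definition U (y : 'cV[C]_m) : 'M[C]_(1 + m, 1) := col_mx 1%:M y.
Definition V (x : 'cV[C]_m) : 'M[C]_(1, 1 + m) := row_mx 1%:M (cadj x).
Definition ip (x y : 'cV[C]_m) : C := (cadj x *m y) 0 0.

Lemma VU x y : V x *m U y = (1 + ip x y)%:M.
Proof.
rewrite /V /U mul_row_col mul1mx raddfD /=; congr (_ + _).
exact: mx11_scalar.
Qed.

Lemma blockE x y :
  block_mx (1%:M : 'M[C]_1) (cadj x) y (y *m cadj x) = U y *m V x.
Proof. by rewrite /U /V mul_col_row mul1mx mulmx1 mul1mx. Qed.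

Lemma ipE x y : ip x y = \sum_i (x i 0)^* * y i 0.
Proof. by rewrite /ip mxE; apply: eq_bigr => i _; rewrite /cadj !mxE. Qed.

Lemma vnorm_ge0 (x : 'cV[C]_m) : 0 <= vnorm x.
Proof. by rewrite /vnorm sqrtC_ge0; apply: sumr_ge0 => i _; apply: exprn_ge0. Qed.

Lemma ip_le x y : `|ip x y| <= vnorm x * vnorm y.
Proof.
rewrite ipE; apply: (le_trans (ler_norm_sum _ _ _)).
rewrite (eq_bigr (fun i => `|x i 0| * `|y i 0|)); last first.
  by move=> i _; rewrite normrM norm_conjC.
exact: cs_real.
Qed.

Lemma prodE lam mu x y x' y' :
  (lam *: (U y *m V x)) *m (mu *: (U y' *m V x')) =
  (lam * mu * (1 + ip x y')) *: (U y *m V x').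
Proof.
rewrite -scalemxAl -scalemxAr !mulmxA -(mulmxA (U y)) VU mul_mx_scalar.
by rewrite -scalemxAl !scalerA mulrA.
Qed.

Lemma V_neq0 x : V x != 0.
Proof.
apply/negP => /eqP H.
have := congr1 (fun M : 'M[C]_(1, 1 + m) => M 0 (lshift m 0)) H.
by rewrite /V row_mxEl !mxE /= => /eqP; rewrite oner_eq0.
Qed.

Lemma scaleE (a : C) p q (M : 'M[C]_(p, q)) i j : (a *: M) i j = a * M i j.
Proof. by rewrite mxE. Qed.
Lemma scalarE (a : C) p (i : 'I_p) : (a%:M) i i = a.
Proof. by rewrite mxE eqxx mulr1n. Qed.

Lemma eig_rank1 k x y g :
  eigenvalue (k *: (U y *m V x)) g -> g = 0 \/ g = k * (1 + ip x y).
Proof.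
move/eigenvalueP => [z Hz z0].
set t := (z *m U y) 0 0.
have H1 : z *m (k *: (U y *m V x)) = (k * t) *: V x.
  by rewrite -scalemxAr mulmxA (mx11_scalar (z *m U y)) mul_scalar_mx scalerA -/t.
rewrite H1 in Hz.
have H2 := congr1 (fun M => (M *m U y) 0 0) Hz.
rewrite /= -!scalemxAl VU !scaleE scalarE -/t in H2.
have [t0|t0] := eqVneq t 0.
  left; rewrite t0 mulr0 scale0r in Hz.
  by move/eqP: Hz; rewrite eq_sym scaler_eq0 (negbTE z0) orbF => /eqP.
right; apply: (mulIf t0); rewrite -H2; ring.
Qed.

Lemma eig_main k x y : eigenvalue (k *: (U y *m V x)) (k * (1 + ip x y)).
Proof.
apply/eigenvalueP; exists (V x); last exact: V_neq0.
by rewrite -scalemxAr mulmxA VU mul_scalar_mx scalerA mulrC.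
Qed.

Lemma eig_zero k x y : (0 < m)%N -> eigenvalue (k *: (U y *m V x)) 0.
Proof.
move=> m0; rewrite /eigenvalue /eigenspace raddf0 subr0 -mxrank_eq0 mxrank_ker.
have h : (\rank (k *: (U y *m V x)) <= 1)%N.
  rewrite scalemxAr; apply: (leq_trans (mxrankM_maxl _ _)); exact: rank_leq_col.
apply/eqP; lia.
Qed.

Lemma bigmax_prop (s : seq C) :
  0 <= \big[Num.max/0]_(a <- s) `|a| /\ forall a, a \in s -> `|a| <= \big[Num.max/0]_(a <- s) `|a|.
Proof.
elim: s => [|b s [IH1 IH2]]; first by rewrite big_nil.
rewrite big_cons.
have [h|h] := real_leP (normr_real b) (ger0_real IH1).
  split=> // a; rewrite inE => /orP[/eqP ->|/IH2] //.
split; first exact: (le_trans IH1 (ltW h)).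
move=> a; rewrite inE => /orP[/eqP ->|/IH2 h2] //.
exact: (le_trans h2 (ltW h)).
Qed.

Lemma specrad_ge (M : 'M[C]_(1 + m)) a : eigenvalue M a -> `|a| <= specrad M.
Proof.
rewrite eigenvalue_root_char /specrad /eigseq.
case: closed_field_poly_normal => s /= Hs.
rewrite {1}Hs (monicP (char_poly_monic M)) scale1r root_prod_XsubC => as_.
by case: (bigmax_prop s) => _ /(_ a as_).
Qed.

Lemma scal_ineq (q a b c d : C) : 0 <= q -> q < 1 ->
  `|a| <= q -> `|b| <= q -> `|c| <= q -> `|d| <= q ->
  `|(1 + a) * (1 + b) - (1 + c) * (1 + d)| <=
     4 * q / (1 - q) ^+ 2 * `|1 + c| * `|1 + d|.
Proof.
move=> q0 q1 ha hb hc hd.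
have q1' : 0 < 1 - q by rewrite subr_gt0.
have lowc : 1 - q <= `|1 + c|.
  apply: le_trans (lerB_normD 1 c); rewrite normr1 lerD2l lerN2 //.
have lowd : 1 - q <= `|1 + d|.
  apply: le_trans (lerB_normD 1 d); rewrite normr1 lerD2l lerN2 //.
have e : (1 + a) * (1 + b) - (1 + c) * (1 + d) = (a - c) * (1 + b) + (1 + c) * (b - d) by ring.
rewrite e; apply: (le_trans (ler_normD _ _)); rewrite !normrM.
have hac : `|a - c| <= 2 * q.
  by apply: (le_trans (ler_normB _ _)); rewrite mulr2n mulrDl mul1r lerD.
have hbd : `|b - d| <= 2 * q.
  by apply: (le_trans (ler_normB _ _)); rewrite mulr2n mulrDl mul1r lerD.
have hb1 : `|1 + b| <= 1 + q.
  by apply: (le_trans (ler_normD _ _)); rewrite normr1 lerD2l.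
set P := `|1 + c|.
have P0 : 0 <= P by apply: normr_ge0.
have H1 : `|a - c| * `|1 + b| + P * `|b - d| <= 2 * q * (1 + q) + P * (2 * q).
  apply: lerD; first by apply: ler_pM.
  by apply: ler_wpM2l.
apply: (le_trans H1).
have eps0 : 0 <= 4 * q / (1 - q) ^+ 2.
  by apply: divr_ge0; [apply: mulr_ge0 | apply: exprn_ge0; apply: ltW].
have H2 : 4 * q / (1 - q) ^+ 2 * P * (1 - q) <= 4 * q / (1 - q) ^+ 2 * P * `|1 + d|.
  by apply: ler_wpM2l => //; apply: mulr_ge0.
apply: le_trans H2.
rewrite -subr_ge0.
have nz : 1 - q != 0 by rewrite gt_eqF.
have -> : 4 * q / (1 - q) ^+ 2 * P * (1 - q) - (2 * q * (1 + q) + P * (2 * q))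
   = 2 * q * (1 + q) * (P - (1 - q)) / (1 - q).
  by field.
apply: divr_ge0; last exact: ltW.
apply: mulr_ge0; last by rewrite subr_ge0.
apply: mulr_ge0; first by apply: mulr_ge0.
by apply: addr_ge0.
Qed.

Lemma ip_bound (rr : C) x y : vnorm x < rr -> vnorm y < rr -> `|ip x y| <= rr ^+ 2.
Proof.
move=> hx hy; apply: (le_trans (ip_le x y)); rewrite expr2.
by apply: ler_pM; rewrite ?vnorm_ge0 ?ltW.
Qed.

Lemma gen (rr eps : C) : (0 < m)%N -> 0 <= rr -> rr ^+ 2 < 1 ->
  eps = 4 * rr ^+ 2 / (1 - rr ^+ 2) ^+ 2 ->
  is_semigroup (Sr m rr) /\ eps_submultiplicative eps (Sr m rr).
Proof.
move=> m0 rr0 rr1 ->; split.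
  move=> A B [x [y [lam [hx hy ->]]]] [x' [y' [mu [hx' hy' ->]]]].
  exists x', y, (lam * mu * (1 + ip x y')); split => //.
  by rewrite !blockE prodE.
have q0 : 0 <= rr ^+ 2 by apply: exprn_ge0.
have eps0 : 0 <= 4 * rr ^+ 2 / (1 - rr ^+ 2) ^+ 2.
  by apply: divr_ge0; [apply: mulr_ge0 | apply: exprn_ge0; rewrite subr_ge0 ltW].
move=> A B [x [y [lam [hx hy ->]]]] [x' [y' [mu [hx' hy' ->]]]] g.
rewrite !blockE.
have sA0 : 0 <= specrad (lam *: (U y *m V x)).
  by have := specrad_ge _ _ (eig_zero lam x y m0); rewrite normr0.
have sB0 : 0 <= specrad (mu *: (U y' *m V x')).
  by have := specrad_ge _ _ (eig_zero mu x' y' m0); rewrite normr0.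
rewrite prodE => /eig_rank1 [->|->].
  exists 0, 0; split; try exact: eig_zero.
  by rewrite mulr0 subr0 normr0; apply: mulr_ge0 => //; apply: mulr_ge0.
exists (lam * (1 + ip x y)), (mu * (1 + ip x' y')); split; try exact: eig_main.
have -> : lam * mu * (1 + ip x y') * (1 + ip x' y) - lam * (1 + ip x y) * (mu * (1 + ip x' y'))
  = (lam * mu) * ((1 + ip x y') * (1 + ip x' y) - (1 + ip x y) * (1 + ip x' y')) by ring.
rewrite normrM.
have Hs := scal_ineq _ _ _ _ _ q0 rr1 (@ip_bound rr x y' hx hy') (@ip_bound rr x' y hx' hy) (@ip_bound rr x y hx hy) (@ip_bound rr x' y' hx' hy').
have Hs2 := ler_wpM2l (normr_ge0 (lam * mu)) Hs.
apply: (le_trans Hs2).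
have -> : `|lam * mu| * (4 * rr ^+ 2 / (1 - rr ^+ 2) ^+ 2 * `|1 + ip x y| * `|1 + ip x' y'|)
  = 4 * rr ^+ 2 / (1 - rr ^+ 2) ^+ 2 * `|lam * (1 + ip x y)| * `|mu * (1 + ip x' y')|.
  by rewrite !normrM; ring.
rewrite -mulrA -[X in _ <= X]mulrA; apply: ler_wpM2l => //.
by apply: ler_pM => //; apply: specrad_ge; apply: eig_main.
Qed.
End Gen.

Theorem mainTheorem5 (R : realType) (n : nat) (hn : (2 <= n)%N) (r : R)
  (hr0 : 0 < r) (hr1 : r < 1) :
  is_semigroup (Sr n.-1 ((r%:C)%C : R[i])) /\
  eps_submultiplicative (((4 * r ^+ 2 / (1 - r ^+ 2) ^+ 2)%:C)%C : R[i])
                        (Sr n.-1 ((r%:C)%C : R[i])).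
Proof.
have m0 : (0 < n.-1)%N by case: n hn => [|[|n]].
apply: gen => //.
- by rewrite ler0c ltW.
- have -> : (1 : R[i]) = (1%:C)%C by [].
  rewrite -rmorphXn /= ltcR.
  have h : r * r < 1 * 1 by apply: ltr_pM => //; apply: ltW.
  by rewrite expr2; rewrite mulr1 in h.
- by rewrite !(rmorphM, rmorphXn, rmorphB, rmorph1, fmorphV, rmorph_nat).
Qed.
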